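(* Let $\mathcal{H}$ be a Hilbert space of finite dimension $d$, and let the set of free states be $\mathcal{F}(\mathcal{H})=\bigcup_k\mathcal{F}_k(\mathcal{H})\subseteq\mathcal{D}(\mathcal{H})$, where each $\mathcal{F}_k(\mathcal{H})$ is a closed convex set and $\mathcal{F}(\mathcal{H})$ is closed. For any resource state $\rho\in\mathcal{D}(\mathcal{H})\setminus\mathcal{F}(\mathcal{H})$, \[\inf_k\ \max_{\{p_i,\Lambda_i\}_i,\{M_i\}_i}\frac{p_{\mathrm{succ}}(\rho,\{p_i,\Lambda_i\}_i,\{M_i\}_i)}{\max_{\sigma_k\in\mathcal{F}_k(\mathcal{H})}p_{\mathrm{succ}}(\sigma_k,\{p_i,\Lambda_i\}_i,\{M_i\}_i)}=1+R_{\mathcal{F}(\mathcal{H})}(\rho).\]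
   Context: $\mathcal{D}(\mathcal{H})$ is the set of density operators on $\mathcal{H}$. A channel ensemble $\{p_i,\Lambda_i\}_i$ consists of a finite probability distribution $(p_i)_i$ and quantum channels $\Lambda_i$ from operators on $\mathcal{H}$ to operators on a common finite-dimensional output space; $\{M_i\}_i$ is a POVM on the output space; $p_{\mathrm{succ}}(\omega,\{p_i,\Lambda_i\}_i,\{M_i\}_i)=\sum_ip_i\operatorname{tr}[M_i\Lambda_i(\omega)]$. The maximum in the numerator/denominator ratio is over all channel ensembles and POVMs. The generalized robustness is $R_{\mathcal{F}(\mathcal{H})}(\rho)=\min\{s\ge0:\exists\tau\in\mathcal{D}(\mathcal{H}),\ \frac{\rho+s\tau}{1+s}\in\mathcal{F}(\mathcal{H})\}$. *)

(* Defs.v *)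
From HB Require Import structures.
From mathcomp Require Import all_boot all_order all_algebra.
From mathcomp Require Import all_classical all_reals all_analysis.
From mathcomp Require Import complex.
Set Implicit Arguments. Unset Strict Implicit. Unset Printing Implicit Defensive.
Import Order.TTheory GRing.Theory Num.Theory.
Import numFieldNormedType.Exports.
Local Open Scope classical_set_scope.
Local Open Scope ring_scope.
Local Open Scope complex_scope.

Section Quantum.
Variable R : realType.
Local Notation C := (R[i]).

Definition adj (m n : nat) (A : 'M[C]_(m, n)) : 'M[C]_(n, m) :=
  (map_mx Num.conj A)^T.

Definition psd (n : nat) (A : 'M[C]_n) : Prop :=
  A = adj A /\ forall v : 'cV[C]_n, 0 <= (adj v *m A *m v) 0 0.

Definition density (d : nat) : set 'M[C]_d :=
  [set A | psd A /\ \tr A = 1].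
Arguments density d : clear implicits.

Definition is_channel (d d' : nat) (L : 'M[C]_d -> 'M[C]_d') : Prop :=
  exists (m : nat) (K : 'I_m -> 'M[C]_(d', d)),
    \sum_(j < m) adj (K j) *m K j = 1%:M /\
    forall X, L X = \sum_(j < m) K j *m X *m adj (K j).

Definition is_prob (n : nat) (p : 'I_n -> R) : Prop :=
  (forall i, 0 <= p i) /\ \sum_(i < n) p i = 1.

Definition is_povm (d' n : nat) (M : 'I_n -> 'M[C]_d') : Prop :=
  (forall i, psd (M i)) /\ \sum_(i < n) M i = 1%:M.

(* a channel ensemble {p_i, Lambda_i}_i together with a POVM {M_i}_i *)
Record game (d : nat) := Game {
  g_n : nat;
  g_dout : nat;
  g_p : 'I_g_n -> R;
  g_L : 'I_g_n -> 'M[C]_d -> 'M[C]_g_dout;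
  g_M : 'I_g_n -> 'M[C]_g_dout }.
Arguments g_n {d} g.
Arguments g_dout {d} g.
Arguments g_p {d} g i.
Arguments g_L {d} g i _.
Arguments g_M {d} g i.

Definition valid_game (d : nat) (g : game d) : Prop :=
  is_prob (g_p g) /\ (forall i, is_channel (g_L g i)) /\ is_povm (g_M g).

Definition psucc (d : nat) (w : 'M[C]_d) (g : game d) : R :=
  \sum_(i < g_n g) g_p g i * complex.Re (\tr (g_M g i *m g_L g i w)).

Definition mx_convex (d : nat) (S : set 'M[C]_d) : Prop :=
  forall A B (t : R), S A -> S B -> 0 <= t <= 1 ->
    S (t%:C *: A + (1 - t)%:C *: B).

Definition mx_closed (d : nat) (S : set 'M[C]_d) : Prop :=
  forall (u : nat -> 'M[C]_d) (A : 'M[C]_d),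
    (forall k, S (u k)) ->
    (forall i j, (fun k => complex.Re (u k i j)) @ \oo --> complex.Re (A i j)) ->
    (forall i j, (fun k => complex.Im (u k i j)) @ \oo --> complex.Im (A i j)) ->
    S A.

Local Open Scope ereal_scope.

Definition max_psucc (d : nat) (S : set 'M[C]_d) (g : game d) : \bar R :=
  ereal_sup [set (psucc s g)%:E | s in S].

(* p_succ(rho, g) / max_{sigma in S} p_succ(sigma, g)  (x/0 = +oo, 0/0 = 0) *)
Definition game_ratio (d : nat) (rho : 'M[C]_d) (S : set 'M[C]_d) (g : game d)
  : \bar R := (psucc rho g)%:E * (max_psucc S g)^-1.

Definition max_ratio (d : nat) (rho : 'M[C]_d) (S : set 'M[C]_d) : \bar R :=
  ereal_sup [set game_ratio rho S g | g in [set g : game d | valid_game g]].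

Definition gen_robustness (d : nat) (F : set 'M[C]_d) (rho : 'M[C]_d) : \bar R :=
  ereal_inf [set s%:E | s in [set s : R | (0 <= s)%R /\
     exists tau, density d tau /\
       F (((1 + s)^-1)%R%:C *: (rho + s%:C *: tau))]].

End Quantum.
Arguments density {R} d.

(* Main.v *)
Require Import Defs.
From HB Require Import structures.
From mathcomp Require Import all_boot all_order all_algebra.
From mathcomp Require Import all_classical all_reals all_analysis.
From mathcomp Require Import complex.
From mathcomp Require Import ring lra spectral sesquilinear.
Import Order.TTheory GRing.Theory Num.Theory.
Import numFieldNormedType.Exports.
Local Open Scope classical_set_scope.
Local Open Scope ring_scope.
Set Implicit Arguments. Unset Strict Implicit. Unset Printing Implicit Defensive.

Section BW.
Local Open Scope complex_scope.
Variable R : realType.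

Lemma incr_ge (f : nat -> nat) : increasing_seq f -> forall n, (n <= f n)%N.
Proof.
move=> /increasing_seqP hf; elim=> [//|n IH].
by apply: leq_ltn_trans IH (hf n).
Qed.

Lemma incr_lt (f : nat -> nat) : increasing_seq f -> forall n m, (n < m)%N -> (f n < f m)%N.
Proof. by move=> hf n m; rewrite !ltnNge; rewrite -[(f m <= f n)%N]/(f m <= f n)%O hf. Qed.

Lemma incr_cvg (f : nat -> nat) : increasing_seq f -> f @ \oo --> \oo.
Proof.
move=> hf P [n _ Pn]; exists n => // m /= hm; apply: Pn => /=.
have := incr_ge hf m; exact: leq_trans.
Qed.

Lemma incr_comp (f g : nat -> nat) :
  increasing_seq f -> increasing_seq g -> increasing_seq (f \o g).
Proof.
move=> hf hg; apply/increasing_seqP => n /=.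
exact: (incr_lt hf (incr_lt hg (ltnSn n))).
Qed.

Lemma subseq_cvgn (u : R^nat) (f : nat -> nat) :
  increasing_seq f -> cvgn u -> cvgn (u \o f).
Proof.
move=> hf hu; apply: (cvgP (limn u)).
exact: (cvg_comp _ _ (incr_cvg hf) hu).
Qed.

Lemma BW_seq (I : eqType) (s : seq I) (u : I -> R^nat) :
  (forall j, bounded_fun (u j)) ->
  exists2 f : nat -> nat, increasing_seq f & forall j, j \in s -> cvgn (u j \o f).
Proof.
move=> hb; elim: s => [|j s IH0].
  exists id; first by move=> n m.
  by move=> k; rewrite in_nil.
case: IH0 => f hf IH.
have bnd : bounded_fun (u j \o f).
  have [M [Mr HM]] := hb j.
  exists M; split => // x Mx y _ /=; exact: HM.
have [g hg cg] := @bolzano_weierstrass R (u j \o f) bnd.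
exists (f \o g); first exact: incr_comp.
move=> k; rewrite in_cons => /orP[/eqP->|ks]; first exact: cg.
exact: (subseq_cvgn hg (IH k ks)).
Qed.
End BW.


Section Mx.
Local Open Scope complex_scope.
Variable R : realType.
Local Notation C := (R[i]).
Variable d : nat.
Implicit Types A B X Y W : 'M[C]_d.
Local Notation Rc := (@complex.Re R).
Local Notation Ic := (@complex.Im R).

Lemma adjE m n (A : 'M[C]_(m, n)) i j : adj A i j = (A j i)^*%C.
Proof. by rewrite !mxE. Qed.

Lemma adjK m n (A : 'M[C]_(m, n)) : adj (adj A) = A.
Proof. by apply/matrixP => i j; rewrite !adjE conjcK. Qed.

Lemma adjD m n (A B : 'M[C]_(m, n)) : adj (A + B) = adj A + adj B.
Proof. by apply/matrixP => i j; rewrite !adjE !mxE rmorphD. Qed.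

Lemma adjN m n (A : 'M[C]_(m, n)) : adj (- A) = - adj A.
Proof. by apply/matrixP => i j; rewrite !adjE !mxE rmorphN. Qed.

Lemma adjZr m n (t : R) (A : 'M[C]_(m, n)) : adj (t%:C *: A) = t%:C *: adj A.
Proof. apply/matrixP => i j; rewrite !adjE !mxE; case: (A j i) => a b; by simpc. Qed.

Lemma adjM m n p (A : 'M[C]_(m, n)) (B : 'M[C]_(n, p)) :
  adj (A *m B) = adj B *m adj A.
Proof.
apply/matrixP => i j; rewrite !mxE rmorph_sum; apply: eq_bigr => k _.
by rewrite !mxE rmorphM mulrC.
Qed.

Lemma adj1 : adj (1%:M : 'M[C]_d) = 1%:M.
Proof. by apply/matrixP => i j; rewrite adjE !mxE eq_sym; case: (_ == _); rewrite ?conjc1 ?conjc0 /=. Qed.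

Definition qf (v : 'cV[C]_d) A : C := (adj v *m A *m v) 0 0.

Lemma qfE v A : qf v A = \sum_i \sum_j ((v i 0)^*%C * A i j * v j 0).
Proof.
rewrite /qf mxE (eq_bigr (fun j => \sum_i ((v i 0)^*%C * A i j * v j 0))).
  exact: exchange_big.
move=> j _; rewrite mxE mulr_suml; apply: eq_bigr => i _.
by rewrite adjE.
Qed.

Lemma qfD v A B : qf v (A + B) = qf v A + qf v B.
Proof. by rewrite /qf mulmxDr mulmxDl mxE. Qed.

Lemma qfN v A : qf v (- A) = - qf v A.
Proof. by rewrite /qf mulmxN mulNmx mxE. Qed.

Lemma qfZ v (k : C) A : qf v (k *: A) = k * qf v A.
Proof. by rewrite /qf -scalemxAr -scalemxAl mxE. Qed.

Lemma conj_qf v A : (qf v A)^*%C = qf v (adj A).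
Proof.
have -> : (qf v A)^*%C = adj (adj v *m A *m v) 0 0 by rewrite adjE.
by rewrite !adjM adjK mulmxA.
Qed.

Lemma Im_conj_eq (z : C) : z^*%C = z -> Ic z = 0.
Proof. case: z => a b /(congr1 (@complex.Im R)) /= h; rewrite /=; lra. Qed.

Lemma herm_qf_Im v A : A = adj A -> Ic (qf v A) = 0.
Proof. by move=> hA; apply: Im_conj_eq; rewrite conj_qf -hA. Qed.

Lemma psdP A : psd A <-> A = adj A /\ forall v, 0 <= Rc (qf v A).
Proof.
split=> [[hA hv]|[hA hv]]; split=> // v.
  by have := hv v; rewrite lecE => /andP[_]; rewrite /=.
by rewrite lecE /= -/(qf v A) herm_qf_Im // eqxx hv.
Qed.


Lemma ReD (x y : C) : Rc (x + y) = Rc x + Rc y. Proof. by case: x; case: y. Qed.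
Lemma ImD (x y : C) : Ic (x + y) = Ic x + Ic y. Proof. by case: x; case: y. Qed.
Lemma ReN (x : C) : Rc (- x) = - Rc x. Proof. by case: x. Qed.
Lemma ImN (x : C) : Ic (- x) = - Ic x. Proof. by case: x. Qed.
Lemma ReM (x y : C) : Rc (x * y) = Rc x * Rc y - Ic x * Ic y. Proof. by case: x; case: y. Qed.
Lemma ImM (x y : C) : Ic (x * y) = Rc x * Ic y + Ic x * Rc y. Proof. by case: x => a b; case: y => c e /=; ring. Qed.
Lemma ReMr (t : R) (x : C) : Rc (t%:C * x) = t * Rc x. Proof. by case: x => a b /=; ring. Qed.
Lemma ImMr (t : R) (x : C) : Ic (t%:C * x) = t * Ic x. Proof. by case: x => a b /=; ring. Qed.
Lemma ReJ (x : C) : Rc (x^*) = Rc x. Proof. by case: x. Qed.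
Lemma ImJ (x : C) : Ic (x^*) = - Ic x. Proof. by case: x. Qed.
Lemma Re0 : Rc 0 = 0. Proof. by []. Qed.
Lemma Im0 : Ic 0 = 0. Proof. by []. Qed.
Lemma Re1 : Rc 1 = 1. Proof. by []. Qed.
Lemma Im1 : Ic 1 = 0. Proof. by []. Qed.

Lemma Re_sum (I : Type) (r : seq I) (P : pred I) (F : I -> C) :
  Rc (\sum_(i <- r | P i) F i) = \sum_(i <- r | P i) Rc (F i).
Proof. exact: (big_morph _ ReD Re0). Qed.
Lemma Im_sum (I : Type) (r : seq I) (P : pred I) (F : I -> C) :
  Ic (\sum_(i <- r | P i) F i) = \sum_(i <- r | P i) Ic (F i).
Proof. exact: (big_morph _ ImD Im0). Qed.

Lemma ge0_C (z : C) : 0 <= z -> 0 <= Rc z.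
Proof. by rewrite lecE => /andP[]. Qed.

Lemma psd_add A B : psd A -> psd B -> psd (A + B).
Proof.
move=> /psdP[hA pA] /psdP[hB pB]; apply/psdP; split.
  by rewrite adjD -hA -hB.
by move=> v; rewrite qfD ReD addr_ge0.
Qed.

Lemma psd_scale (t : R) A : 0 <= t -> psd A -> psd (t%:C *: A).
Proof.
move=> t0 /psdP[hA pA]; apply/psdP; split.
  by rewrite adjZr -hA.
by move=> v; rewrite qfZ ReMr mulr_ge0.
Qed.

Lemma psd0 : psd (0 : 'M[C]_d).
Proof.
apply/psdP; split; first by apply/matrixP => i j; rewrite adjE !mxE conjc0.
by move=> v; rewrite /qf mulmx0 mul0mx mxE.
Qed.

Lemma psd_rank1 (v : 'cV[C]_d) : psd (v *m adj v).
Proof.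
apply/psdP; split; first by rewrite adjM adjK.
move=> u; apply: ge0_C; rewrite /qf mulmxA -(mulmxA (adj u *m v)) mxE big_ord1.
have -> : (adj v *m u) 0 0 = ((adj u *m v) 0 0)^*.
  by rewrite -adjE adjM adjK.
exact: mulcJ_ge0.
Qed.

Definition ip X Y : R :=
  \sum_i \sum_j (Rc (X i j) * Rc (Y i j) + Ic (X i j) * Ic (Y i j)).

Lemma ipC X Y : ip X Y = ip Y X.
Proof. by apply: eq_bigr => i _; apply: eq_bigr => j _; ring. Qed.

Lemma ipDl X Y Z : ip (X + Y) Z = ip X Z + ip Y Z.
Proof.
rewrite /ip -big_split; apply: eq_bigr => i _; rewrite -big_split; apply: eq_bigr => j _.
rewrite !mxE ReD ImD /=; ring.
Qed.

Lemma ipNl X Y : ip (- X) Y = - ip X Y.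
Proof.
rewrite /ip -sumrN; apply: eq_bigr => i _; rewrite -sumrN; apply: eq_bigr => j _.
rewrite !mxE ReN ImN; ring.
Qed.

Lemma ipZl (t : R) X Y : ip (t%:C *: X) Y = t * ip X Y.
Proof.
rewrite /ip mulr_sumr; apply: eq_bigr => i _; rewrite mulr_sumr; apply: eq_bigr => j _.
rewrite !mxE ReMr ImMr; ring.
Qed.

Lemma ipBl X Y Z : ip (X - Y) Z = ip X Z - ip Y Z.
Proof. by rewrite ipDl ipNl. Qed.

Lemma ipDr X Y Z : ip Z (X + Y) = ip Z X + ip Z Y.
Proof. by rewrite ipC ipDl ipC (ipC Y). Qed.
Lemma ipNr X Y : ip Y (- X) = - ip Y X.
Proof. by rewrite ipC ipNl ipC. Qed.
Lemma ipBr X Y Z : ip Z (X - Y) = ip Z X - ip Z Y.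
Proof. by rewrite ipDr ipNr. Qed.
Lemma ipZr (t : R) X Y : ip Y (t%:C *: X) = t * ip Y X.
Proof. by rewrite ipC ipZl ipC. Qed.

Lemma ip_ge0 X : 0 <= ip X X.
Proof.
apply: sumr_ge0 => i _; apply: sumr_ge0 => j _.
by rewrite addr_ge0 // -expr2 sqr_ge0.
Qed.

Lemma ip_eq0 X : ip X X = 0 -> X = 0.
Proof.
move=> h; apply/matrixP => i j; rewrite mxE.
have hr k l : 0 <= Rc (X k l) * Rc (X k l) + Ic (X k l) * Ic (X k l).
  by rewrite addr_ge0 // -expr2 sqr_ge0.
have hs k : 0 <= \sum_l (Rc (X k l) * Rc (X k l) + Ic (X k l) * Ic (X k l)).
  by apply: sumr_ge0.
move/eqP: h; rewrite /ip psumr_eq0; last by move=> k _; apply: hs.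
move=> /allP /(_ i (mem_index_enum _)) /=; rewrite psumr_eq0; last by move=> l _; apply: hr.
move=> /allP /(_ j (mem_index_enum _)) /=.
rewrite paddr_eq0 -?expr2 ?sqr_ge0 // !sqrf_eq0 => /andP[/eqP h1 /eqP h2].
by case: (X i j) h1 h2 => a b /= -> ->.
Qed.

Lemma ip_trace X Y : Y = adj Y -> Rc (\tr (X *m Y)) = ip X Y.
Proof.
move=> hY; rewrite /mxtrace Re_sum; apply: eq_bigr => i _.
rewrite mxE Re_sum; apply: eq_bigr => j _.
have -> : Y j i = (Y i j)^* by rewrite {1}hY adjE.
rewrite ReM ReJ ImJ; ring.
Qed.

Lemma ip_rank1 W (v : 'cV[C]_d) : ip W (v *m adj v) = Rc (qf v W).
Proof.
rewrite qfE Re_sum /ip; apply: eq_bigr => i _; rewrite Re_sum; apply: eq_bigr => j _.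
rewrite mxE big_ord1 adjE !ReM !ImM !ReJ !ImJ; ring.
Qed.


Definition vn (v : 'cV[C]_d) : R := \sum_k (Rc (v k 0) ^+ 2 + Ic (v k 0) ^+ 2).

Lemma vn_ge (v : 'cV[C]_d) k : Rc (v k 0) ^+ 2 + Ic (v k 0) ^+ 2 <= vn v.
Proof.
rewrite /vn (bigD1 k) //= lerDl; apply: sumr_ge0 => l _.
by rewrite addr_ge0 // sqr_ge0.
Qed.

Lemma Re_qf1 (v : 'cV[C]_d) : Rc (qf v 1%:M) = vn v.
Proof.
rewrite /qf mulmx1 mxE Re_sum; apply: eq_bigr => k _.
rewrite adjE ReM ReJ ImJ; ring.
Qed.

Lemma absx_le (a b c e : R) : `|a * c + b * e| <= (a^+2 + b^+2 + c^+2 + e^+2) / 2.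
Proof.
have [h|h] := lerP 0 (a * c + b * e).
  by rewrite ger0_norm //; have := sqr_ge0 (a - c); have := sqr_ge0 (b - e); nra.
by rewrite ltr0_norm //; have := sqr_ge0 (a + c); have := sqr_ge0 (b + e); nra.
Qed.

Lemma absy_le (a b c e : R) : `|b * c - a * e| <= (a^+2 + b^+2 + c^+2 + e^+2) / 2.
Proof.
have [h|h] := lerP 0 (b * c - a * e).
  by rewrite ger0_norm //; have := sqr_ge0 (b - c); have := sqr_ge0 (a + e); nra.
by rewrite ltr0_norm //; have := sqr_ge0 (b + c); have := sqr_ge0 (a - e); nra.
Qed.

Lemma pq_le (p q x y M : R) : `|x| <= M -> `|y| <= M -> p * x + q * y <= (`|p| + `|q|) * M.
Proof.
move=> hx hy; rewrite mulrDl; apply: lerD.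
  apply: le_trans (ler_norm _) _; rewrite normrM; apply: ler_wpM2l => //.
apply: le_trans (ler_norm _) _; rewrite normrM; apply: ler_wpM2l => //.
Qed.

Definition mxS W : R := \sum_i \sum_j (`|Rc (W i j)| + `|Ic (W i j)|).

Lemma mxS_ge0 W : 0 <= mxS W.
Proof. by apply: sumr_ge0 => i _; apply: sumr_ge0 => j _; rewrite addr_ge0. Qed.

Lemma Re_qf_le W (v : 'cV[C]_d) : Rc (qf v W) <= mxS W * vn v.
Proof.
rewrite qfE Re_sum /mxS mulr_suml; apply: ler_sum => i _.
rewrite Re_sum mulr_suml; apply: ler_sum => j _.
set a := Rc (v i 0); set b := Ic (v i 0); set c := Rc (v j 0); set e := Ic (v j 0).
have -> : Rc ((v i 0)^* * W i j * v j 0) =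
   Rc (W i j) * (a * c + b * e) + Ic (W i j) * (b * c - a * e).
  by rewrite !ReM !ImM !ReJ !ImJ -/a -/b -/c -/e; ring.
apply: pq_le.
  apply: le_trans (absx_le _ _ _ _) _.
  have := vn_ge v i; have := vn_ge v j; rewrite -/a -/b -/c -/e; lra.
apply: le_trans (absy_le _ _ _ _) _.
have := vn_ge v i; have := vn_ge v j; rewrite -/a -/b -/c -/e; lra.
Qed.

Lemma vn_ge0 (v : 'cV[C]_d) : 0 <= vn v.
Proof. by apply: sumr_ge0 => k _; rewrite addr_ge0 // sqr_ge0. Qed.

Lemma psd_bound W : psd W -> psd (1%:M - ((1 + mxS W)^-1)%:C *: W).
Proof.
move=> /psdP[hW pW]; apply/psdP; split.
  by rewrite adjD adjN adjZr adj1 -hW.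
move=> v; rewrite qfD qfN qfZ ReD ReN ReMr Re_qf1.
have hS := mxS_ge0 W; have hN := vn_ge0 v; have hq := Re_qf_le W v.
have h1 : 0 < 1 + mxS W by lra.
set al := (1 + mxS W)^-1.
have hal : al * (1 + mxS W) = 1 by rewrite mulVf // gt_eqF.
have hal0 : 0 < al by rewrite invr_gt0.
have : al * Rc (qf v W) <= al * (mxS W * vn v) by rewrite ler_wpM2l // ltW.
nra.
Qed.

End Mx.


Section Tr.
Local Open Scope complex_scope.
Variable R : realType.
Local Notation C := (R[i]).
Variable d : nat.
Local Notation Rc := (@complex.Re R).
Local Notation Ic := (@complex.Im R).

Lemma adj_tc m n (M : 'M[C]_(m, n)) : adj M = (M ^t* )%sesqui.
Proof. by rewrite /adj map_trmx. Qed.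

Lemma row_col_mul (X Y : 'M[C]_d) k : (X *m Y) k k = (row k X *m col k Y) 0 0.
Proof. by rewrite !mxE; apply: eq_bigr => j _; rewrite !mxE. Qed.

Lemma adj_row (U : 'M[C]_d) k : adj (row k U) = col k (adj U).
Proof. by apply/matrixP => i j; rewrite adjE !mxE. Qed.

Lemma conj_diag (U A : 'M[C]_d) k : (U *m A *m adj U) k k = qf (adj (row k U)) A.
Proof. by rewrite row_col_mul row_mul -adj_row /qf adjK. Qed.

Lemma tr_psd_ge0 (A B : 'M[C]_d) : psd A -> psd B -> 0 <= \tr (A *m B).
Proof.
move=> pA pB; have [hB _] := pB.
have nB : B \is normalmx.
  by apply/normalmxP; rewrite -adj_tc -hB.
have Bsp := orthomx_spectralP nB.
set U := spectralmx B in Bsp; set D := spectral_diag B in Bsp.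
have Uu : U \is unitarymx := spectral_unitarymx B.
have UUt : U *m adj U = 1%:M by rewrite adj_tc; apply/unitarymxP.
rewrite invmx_unitary // -adj_tc in Bsp.
have UBU : U *m B *m adj U = diag_mx D.
  rewrite Bsp !mulmxA UUt mul1mx -mulmxA UUt mulmx1 //.
have -> : \tr (A *m B) = \tr ((U *m A *m adj U) *m diag_mx D).
  by rewrite {1}Bsp !mulmxA mxtrace_mulC !mulmxA.
rewrite mul_mx_diag /mxtrace.
apply: sumr_ge0 => k _; rewrite mxE.
apply: mulr_ge0.
  by rewrite conj_diag; case: pA => _; apply.
have -> : D 0 k = (U *m B *m adj U) k k by rewrite UBU mxE eqxx mulr1n.
by rewrite conj_diag; case: pB => _; apply.
Qed.

End Tr.


Section Lim.
Local Open Scope complex_scope.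
Variable R : realType.
Local Notation C := (R[i]).
Variable d : nat.
Local Notation Rc := (@complex.Re R).
Local Notation Ic := (@complex.Im R).

Lemma cvg_bsum (I : Type) (r : seq I) (f : I -> nat -> R) (l : I -> R) :
  (forall i, f i @ \oo --> l i) ->
  (fun n => \sum_(i <- r) f i n) @ \oo --> \sum_(i <- r) l i.
Proof.
move=> h; elim: r => [|a r IH].
  rewrite big_nil; under eq_cvg do rewrite big_nil; exact: cvg_cst.
rewrite big_cons; under eq_cvg do rewrite big_cons.
exact: cvgD (h a) IH.
Qed.

Definition mcvg (u : nat -> 'M[C]_d) (A : 'M[C]_d) :=
  forall i j, (fun k => Rc (u k i j)) @ \oo --> Rc (A i j) /\
              (fun k => Ic (u k i j)) @ \oo --> Ic (A i j).

Lemma complex_eq (x y : C) : Rc x = Rc y -> Ic x = Ic y -> x = y.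
Proof. by case: x => a b; case: y => a' b' /= -> ->. Qed.

Lemma ReM3 (a X b : C) : Rc (a * X * b) =
  (Rc a * Rc b - Ic a * Ic b) * Rc X - (Rc a * Ic b + Ic a * Rc b) * Ic X.
Proof. by case: a => ? ?; case: X => ? ?; case: b => ? ? /=; ring. Qed.

Lemma cvg_lin (u : nat -> 'M[C]_d) A (a b : C) i j : mcvg u A ->
  (fun k => Rc (a * u k i j * b)) @ \oo --> Rc (a * A i j * b).
Proof.
move=> h; have [hr hi] := h i j.
rewrite ReM3; under eq_cvg do rewrite ReM3.
by apply: cvgB; apply: cvgM => //; exact: cvg_cst.
Qed.

Lemma psd_closed (u : nat -> 'M[C]_d) A : mcvg u A -> (forall n, psd (u n)) -> psd A.
Proof.
move=> h pu; apply/psdP; split.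
  apply/matrixP => i j; rewrite adjE.
  have [hr hi] := h i j; have [hr' hi'] := h j i.
  apply: complex_eq; rewrite ?ReJ ?ImJ.
    have e : (fun k => Rc (u k i j)) = (fun k => Rc (u k j i)).
      by apply: funext => k; case: (pu k) => hk _; rewrite {1}hk adjE ReJ.
    rewrite e in hr; exact: (cvg_unique _ hr hr').
  have e : (fun k => Ic (u k i j)) = (fun k => - Ic (u k j i)).
    by apply: funext => k; case: (pu k) => hk _; rewrite {1}hk adjE ImJ.
  rewrite e in hi; exact: (cvg_unique _ hi (cvgN hi')).
move=> v; rewrite qfE Re_sum.
have hc : (fun k => Rc (qf v (u k))) @ \oo --> \sum_i Rc (\sum_j ((v i 0)^* * A i j * v j 0)).
  under eq_cvg do rewrite qfE Re_sum.
  apply: cvg_bsum => i; under eq_cvg do rewrite Re_sum; rewrite Re_sum.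
  by apply: cvg_bsum => j; apply: cvg_lin.
apply: (cvgr_to_ge hc); near=> k; case/psdP: (pu k) => _; apply.
Unshelve. all: by end_near.
Qed.


Lemma sum_delta (F : 'I_d -> C) i : \sum_k ((k == i)%:R * F k) = F i.
Proof.
rewrite (bigD1 i) //= eqxx mul1r big1 ?addr0 // => k /negbTE ->; by rewrite mul0r.
Qed.

Lemma qf2 (A : 'M[C]_d) i j (u : C) :
  qf (\col_k ((k == i)%:R + u * (k == j)%:R)) A =
  (A i i + u * A i j) + u^* * (A j i + u * A j j).
Proof.
rewrite qfE.
have inner k (ck : C) : \sum_l (ck * A k l * (\col_k0 ((k0 == i)%:R + u * (k0 == j)%:R)) l 0)
   = ck * A k i + ck * A k j * u.
  rewrite (eq_bigr (fun l => (l == i)%:R * (ck * A k l) + (l == j)%:R * (ck * A k l * u))).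
    by rewrite big_split /= !sum_delta.
  by move=> l _; rewrite mxE; ring.
under eq_bigr do rewrite inner.
rewrite (eq_bigr (fun k => (k == i)%:R * (A k i + A k j * u) + (k == j)%:R * (u^* * (A k i + A k j * u)))).
  by rewrite big_split /= !sum_delta; ring.
move=> k _; rewrite mxE rmorphD rmorphM /= !conjc_nat; ring.
Qed.


Lemma dens_diag (s : 'M[C]_d) k : density d s -> 0 <= Rc (s k k) <= 1.
Proof.
move=> [ps ts]; have h0 l : 0 <= Rc (s l l).
  have := ((psdP _).1 ps).2 (\col_k0 ((k0 == l)%:R + 0 * (k0 == l)%:R)).
  by rewrite qf2 !mul0r !addr0 rmorph0 mul0r addr0.
apply/andP; split => //.
have : Rc (\tr s) = 1 by rewrite ts.
rewrite /mxtrace Re_sum (bigD1 k) //= => e.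
have : 0 <= \sum_(l | l != k) Rc (s l l) by apply: sumr_ge0.
lra.
Qed.

Lemma dens_entry (s : 'M[C]_d) i j : density d s ->
  `|Rc (s i j)| <= 1 /\ `|Ic (s i j)| <= 1.
Proof.
move=> ds; have [ps _] := ds; have [hs _] := ps.
have h u : 0 <= Rc ((s i i + u * s i j) + u^* * ((s i j)^* + u * s j j)).
  have := ((psdP _).1 ps).2 (\col_k ((k == i)%:R + u * (k == j)%:R)).
  by rewrite qf2 [s j i](_ : _ = (s i j)^*) // {1}hs adjE.
have h1 := h 1; have h2 := h (-1); have h3 := h 'i; have h4 := h (-'i).
move: h1 h2 h3 h4 (dens_diag i ds) (dens_diag j ds).
case: (s i j) => a b; case: (s i i) => p q; case: (s j j) => r t /=.
move=> h1 h2 h3 h4 hi hj.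
split; rewrite ler_norml; apply/andP; split; lra.
Qed.

End Lim.


Section Sep1.
Local Open Scope complex_scope.
Variable R : realType.
Local Notation C := (R[i]).
Variable d : nat.
Local Notation Rc := (@complex.Re R).
Local Notation Ic := (@complex.Im R).

Lemma entry_le_ip (X : 'M[C]_d) i j : Rc (X i j) ^+ 2 + Ic (X i j) ^+ 2 <= ip X X.
Proof.
have hr k l : 0 <= Rc (X k l) * Rc (X k l) + Ic (X k l) * Ic (X k l).
  by rewrite addr_ge0 // -expr2 sqr_ge0.
rewrite /ip (bigD1 i) //= (bigD1 j) //= !expr2 -addrA lerDl.
apply: addr_ge0; first by apply: sumr_ge0 => l _; apply: hr.
by apply: sumr_ge0 => k _; apply: sumr_ge0 => l _; apply: hr.
Qed.

Lemma abs_le_sq (a M : R) : a ^+ 2 <= M -> `|a| <= 1 + M.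
Proof.
move=> h; have [ha|ha] := lerP 0 a.
  by rewrite ger0_norm //; nra.
by rewrite ltr0_norm //; nra.
Qed.

Lemma realcB1 (t : R) : ((1 - t)%:C : C) = 1 - t%:C.
Proof. by apply: complex_eq => /=; rewrite ?subr0 //; lra. Qed.

Lemma entry_comb (c : R) (A M X : 'M[C]_d) i j :
  Rc ((c%:C *: A - M - X) i j) = c * Rc (A i j) - Rc (M i j) - Rc (X i j) /\
  Ic ((c%:C *: A - M - X) i j) = c * Ic (A i j) - Ic (M i j) - Ic (X i j).
Proof. rewrite !mxE; case: (A i j) => ? ?; case: (M i j) => ? ?; case: (X i j) => ? ? /=; split; ring. Qed.

Lemma mcvg_comb (c : R) (u v : nat -> 'M[C]_d) (A M X : 'M[C]_d) :
  mcvg u A -> mcvg v X ->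
  mcvg (fun n => c%:C *: u n - M - v n) (c%:C *: A - M - X).
Proof.
move=> hu hv i j; have [hur hui] := hu i j; have [hvr hvi] := hv i j.
have [-> ->] := entry_comb c A M X i j.
split.
  under eq_cvg do rewrite (entry_comb c _ M _ i j).1.
  by apply: cvgB => //; apply: cvgB; [apply: cvgM => //; exact: cvg_cst | exact: cvg_cst].
under eq_cvg do rewrite (entry_comb c _ M _ i j).2.
by apply: cvgB => //; apply: cvgB; [apply: cvgM => //; exact: cvg_cst | exact: cvg_cst].
Qed.

Lemma ip_cvg (u : nat -> 'M[C]_d) X : mcvg u X ->
  (fun n => ip (u n) (u n)) @ \oo --> ip X X.
Proof.
move=> h; apply: cvg_bsum => i; apply: cvg_bsum => j.
have [hr hi] := h i j.
by apply: cvgD; apply: cvgM.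
Qed.

Lemma var_real (a b : R) : 0 <= b ->
  (forall t, 0 < t <= 1 -> 0 <= 2 * t * a + t ^+ 2 * b) -> 0 <= a.
Proof.
move=> hb h; rewrite leNgt; apply/negP => ha.
have hba : 0 < b - a by lra.
pose t := - a / (b - a).
have ht0 : 0 < t by rewrite /t divr_gt0 //; lra.
have ht1 : t <= 1 by rewrite /t ler_pdivrMr //; lra.
have htb : t * b <= - a.
  rewrite /t mulrAC ler_pdivrMr //; nra.
have := h t; rewrite ht0 ht1 => /(_ isT).
have : 0 < t * (- a) by apply: mulr_gt0; lra.
nra.
Qed.

Lemma ip_expand (X Y : 'M[C]_d) (t : R) :
  ip (X + t%:C *: Y) (X + t%:C *: Y) = ip X X + 2 * t * ip X Y + t ^+ 2 * ip Y Y.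
Proof. by rewrite !ipDl !ipDr !ipZl !ipZr (ipC Y X); ring. Qed.

Lemma comb_id (c t : R) (s1 s2 Q1 Q2 rho : 'M[C]_d) :
  t%:C *: (c%:C *: s1 - rho - Q1) + (1 - t)%:C *: (c%:C *: s2 - rho - Q2) =
  c%:C *: (t%:C *: s1 + (1 - t)%:C *: s2) - rho - (t%:C *: Q1 + (1 - t)%:C *: Q2).
Proof. by apply/matrixP => i j; rewrite !mxE realcB1; ring. Qed.

End Sep1.


Section Sep2.
Local Open Scope complex_scope.
Variable R : realType.
Local Notation C := (R[i]).
Variable d : nat.
Local Notation Rc := (@complex.Re R).
Local Notation Ic := (@complex.Im R).

Lemma separation (F : set 'M[C]_d) (rho : 'M[C]_d) (c : R) :
  F `<=` density d -> F !=set0 -> mx_convex F -> mx_closed F ->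
  density d rho -> 0 < c ->
  (forall s, F s -> ~ psd (c%:C *: s - rho)) ->
  exists W, psd W /\ exists2 del : R, 0 < del &
    forall s, F s -> c * ip W s + del <= ip W rho.
Proof.
move=> Fd [s0 Fs0] Fconv Fcl drho c0 hnot.
pose B := fun x : 'M[C]_d => exists s Q, [/\ F s, psd Q & x = c%:C *: s - rho - Q].
pose S := [set ip x x | x in B].
have B0 : B (c%:C *: s0 - rho - 0) by exists s0, 0; split => //; exact: psd0.
have hlbS : has_lbound S by exists 0 => y [x _ <-]; exact: ip_ge0.
have hinf : has_inf S by split => //; exists (ip (c%:C *: s0 - rho - 0) (c%:C *: s0 - rho - 0)); exists (c%:C *: s0 - rho - 0).
set d0 := inf S.
have hlb x : B x -> d0 <= ip x x by move=> Bx; apply: ge_inf => //; exists x.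
have approx (n : nat) : exists sQ : 'M[C]_d * 'M[C]_d, [/\ F sQ.1, psd sQ.2 &
    ip (c%:C *: sQ.1 - rho - sQ.2) (c%:C *: sQ.1 - rho - sQ.2) < d0 + n.+1%:R^-1].
  have hpos : 0 < n.+1%:R^-1 :> R by rewrite invr_gt0 ltr0Sn.
  have [e [x [s [Q [Fs pQ ->]]] <-] he] := @inf_adherent R S (n.+1%:R^-1) hpos hinf.
  by exists (s, Q).
have [f hf] := choice approx.
pose sn n := (f n).1; pose Qn n := (f n).2; pose xn n := c%:C *: sn n - rho - Qn n.
have Fsn n : F (sn n) by case: (hf n).
have pQn n : psd (Qn n) by case: (hf n).
have xlt n : ip (xn n) (xn n) < d0 + n.+1%:R^-1 by case: (hf n).
have bx n i j : `|Rc (xn n i j)| <= 2 + d0 /\ `|Ic (xn n i j)| <= 2 + d0.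
  have h1 := entry_le_ip (xn n) i j; have h2 := xlt n.
  have h3 : n.+1%:R^-1 <= 1 :> R by rewrite invf_le1 ?ler1n ?ltr0Sn.
  have h4 := sqr_ge0 (Ic (xn n i j)); have h5 := sqr_ge0 (Rc (xn n i j)).
  move: h1 h2 h3 h4 h5; set q := ip _ _; set a := Rc _; set b := Ic _; set e := _^-1.
  move=> h1 h2 h3 h4 h5.
  have hr : a ^+ 2 <= 1 + d0 by lra.
  have hi : b ^+ 2 <= 1 + d0 by lra.
  by split; [have := abs_le_sq hr | have := abs_le_sq hi]; lra.
have bs n i j := dens_entry i j (Fd _ (Fsn n)).
pose M0 := 3 + `|d0|.
pose u (k : (bool * bool * 'I_d * 'I_d)%type) (n : nat) : R :=
  let: (b1, b2, i, j) := k in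
  if b2 then Rc ((if b1 then sn n else xn n) i j) else Ic ((if b1 then sn n else xn n) i j).
have ub k n : `|u k n| <= M0.
  have h0 := ler_norm d0; have h1 := normr_ge0 d0.
  case: k => [[[b1 b2] i] j]; have := bx n i j; have := bs n i j.
  by rewrite /M0; case: b1; case: b2; move=> /= [h2 h3] [h4 h5]; lra.
have bnd k : bounded_fun (u k).
  exists M0; split; first exact: num_real.
  by move=> x Mx y _; apply: le_trans (ub k y) (ltW Mx).
have [phi hphi cphi] := BW_seq (enum [set: (bool * bool * 'I_d * 'I_d)%type]) bnd.
pose L k := limn (u k \o phi).
have cvk k : (u k \o phi) @ \oo --> L k.
  by apply: cphi; rewrite mem_enum in_setT.
pose sstar := \matrix_(i, j) (L (true, true, i, j) +i* L (true, false, i, j)).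
pose xstar := \matrix_(i, j) (L (false, true, i, j) +i* L (false, false, i, j)).
have ms : mcvg (fun n => sn (phi n)) sstar.
  by move=> i j; rewrite !mxE /=; split; [exact: (cvk (true, true, i, j)) | exact: (cvk (true, false, i, j))].
have mx : mcvg (fun n => xn (phi n)) xstar.
  by move=> i j; rewrite !mxE /=; split; [exact: (cvk (false, true, i, j)) | exact: (cvk (false, false, i, j))].
have Fss : F sstar.
  by apply: (Fcl (fun n => sn (phi n))) => // i j; [exact: (ms i j).1 | exact: (ms i j).2].
pose Qstar := c%:C *: sstar - rho - xstar.
have mQ : mcvg (fun n => Qn (phi n)) Qstar.
  have e : (fun n => Qn (phi n)) = (fun n => c%:C *: sn (phi n) - rho - xn (phi n)).
    by apply: funext => n; rewrite /xn; apply/matrixP => i j; rewrite !mxE; ring.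
  rewrite e; exact: mcvg_comb.
have pQs : psd Qstar by apply: psd_closed mQ _.
have exs : xstar = c%:C *: sstar - rho - Qstar.
  by rewrite /Qstar; apply/matrixP => i j; rewrite !mxE; ring.
have Bxs : B xstar by exists sstar, Qstar; split.
have ipc := ip_cvg mx.
have hN (N : nat) : ip xstar xstar <= d0 + N.+1%:R^-1.
  apply: (cvgr_to_le ipc); near=> n.
  have hn : (N <= n)%N by near: n; exists N.
  have hpn : (N <= phi n)%N by apply: leq_trans hn (incr_ge hphi n).
  have := xlt (phi n).
  have : (phi n).+1%:R^-1 <= N.+1%:R^-1 :> R.
    by rewrite lef_pV2 ?posrE ?ltr0Sn // ler_nat ltnS.
  move=> h1 h2 /=; apply: ltW; apply: (lt_le_trans h2); by rewrite lerD2l.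
have hle : ip xstar xstar <= d0.
  rewrite leNgt; apply/negP => hlt; have he : 0 < ip xstar xstar - d0 by lra.
  have [N _ /(_ N (leqnn N)) hN'] := near_infty_natSinv_lt (PosNum he).
  move: (hN N) => h; rewrite /= in hN'.
  have h' : ip xstar xstar - d0 <= N.+1%:R^-1 by rewrite lerBlDl.
  by move: hN'; rewrite ltNge h'.
have hmin y : B y -> ip xstar xstar <= ip y y.
  by move=> By; apply: le_trans hle (hlb y By).
have hvar y : B y -> ip xstar xstar <= ip xstar y.
  move=> By; have By' := By; case: By' => [s1 [Q1 [Fs1 pQ1 ey]]].
  pose w := y - xstar.
  suff : 0 <= ip xstar w by rewrite /w ipBr subr_ge0.
  apply: (var_real (ip_ge0 w)) => t /andP[t0 t1].
  have Bz : B (xstar + t%:C *: w).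
    exists (t%:C *: s1 + (1 - t)%:C *: sstar), (t%:C *: Q1 + (1 - t)%:C *: Qstar); split.
    - by apply: Fconv => //; rewrite (ltW t0) t1.
    - by apply: psd_add; apply: psd_scale => //; [exact: ltW | rewrite subr_ge0].
    - rewrite -comb_id -ey /w -exs; apply/matrixP => i j; rewrite !mxE realcB1; ring.
  have := hmin _ Bz; rewrite ip_expand.
  set q := ip xstar xstar; set a := ip xstar w; set b := ip w w.
  move=> h; rewrite -(subrr q); lra.
have hd : 0 < ip xstar xstar.
  have := ip_ge0 xstar; rewrite le_eqVlt => /orP[/eqP h0|//].
  have x0 := ip_eq0 (esym h0).
  exfalso; apply: (hnot sstar Fss).
  have -> : c%:C *: sstar - rho = Qstar by rewrite /Qstar x0 subr0.
  exact: pQs.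
have hs : sstar = adj sstar by case: (Fd _ Fss) => [[]].
have hr : rho = adj rho by case: drho => [[]].
have hQ : Qstar = adj Qstar by case: pQs.
have hxs : xstar = adj xstar.
  by rewrite {2}exs !adjD !adjN adjZr -hs -hr -hQ -exs.
exists (- xstar); split.
  apply/psdP; split; first by rewrite adjN -hxs.
  move=> v; rewrite -ip_rank1 ipNl oppr_ge0.
  have By : B (xstar - v *m adj v).
    exists sstar, (Qstar + v *m adj v); split => //; first exact: psd_add pQs (psd_rank1 v).
    by rewrite {1}exs; apply/matrixP => i j; rewrite !mxE; ring.
  have := hvar _ By; rewrite ipBr.
  set q := ip xstar xstar; set a := ip xstar (v *m adj v).
  move=> h; rewrite -(subrr q); lra.
exists (ip xstar xstar) => // s Fs.
have By : B (c%:C *: s - rho - 0) by exists s, 0; split => //; exact: psd0.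
have := hvar _ By; rewrite subr0 !ipNl ipBr ipZr.
set q := ip xstar xstar; set a := ip xstar s; set b := ip xstar rho.
move=> h; lra.
Unshelve. all: by end_near.
Qed.
End Sep2.


Section Games.
Local Open Scope complex_scope.
Variable R : realType.
Local Notation C := (R[i]).
Local Notation Rc := (@complex.Re R).
Local Notation Ic := (@complex.Im R).

Lemma chan_lin d d' (L : 'M[C]_d -> 'M[C]_d') : is_channel L ->
  forall (a b : R) X Y, L (a%:C *: X + b%:C *: Y) = a%:C *: L X + b%:C *: L Y.
Proof.
case=> m [K [_ hL]] a b X Y; rewrite !hL !scaler_sumr -big_split; apply: eq_bigr => j _.
by rewrite mulmxDr mulmxDl -!scalemxAr -!scalemxAl.
Qed.

Lemma psd_sum d (I : Type) (r : seq I) (P : pred I) (F : I -> 'M[C]_d) :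
  (forall i, P i -> psd (F i)) -> psd (\sum_(i <- r | P i) F i).
Proof.
move=> h; elim/big_ind: _ => //; first exact: psd0.
exact: psd_add.
Qed.

Lemma psd_conj d d' (K : 'M[C]_(d', d)) X : psd X -> psd (K *m X *m adj K).
Proof.
move=> /psdP[hX pX]; apply/psdP; split.
  by rewrite !adjM adjK -hX mulmxA.
move=> v; have := pX (adj K *m v).
by rewrite /qf adjM adjK !mulmxA.
Qed.

Lemma chan_psd d d' (L : 'M[C]_d -> 'M[C]_d') X : is_channel L -> psd X -> psd (L X).
Proof.
case=> m [K [_ hL]] pX; rewrite hL; apply: psd_sum => j _; exact: psd_conj.
Qed.

Lemma ReDr (a b : R) (x y : C) : Rc (a%:C * x + b%:C * y) = a * Rc x + b * Rc y.
Proof. by case: x => ? ?; case: y => ? ? /=; ring. Qed.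

Lemma psucc_lin d (g : game R d) (a b : R) X Y : valid_game g ->
  psucc (a%:C *: X + b%:C *: Y) g = a * psucc X g + b * psucc Y g.
Proof.
case=> _ [hch _]; rewrite /psucc !mulr_sumr -big_split; apply: eq_bigr => i _.
rewrite chan_lin // mulmxDr -!scalemxAr mxtraceD !mxtraceZ ReDr /=; ring.
Qed.

Lemma psucc_ge0 d (g : game R d) X : valid_game g -> psd X -> 0 <= psucc X g.
Proof.
case=> [[p0 _] [hch [pM _]]] pX; apply: sumr_ge0 => i _.
apply: mulr_ge0 => //; apply: ge0_C; apply: tr_psd_ge0 => //.
exact: chan_psd.
Qed.

Definition gameW d (W : 'M[C]_d) : game R d :=
  @Game R d 2 d (fun i => if i == ord0 then 1 else 0) (fun _ X => X)
    (fun i => if i == ord0 then W else 1%:M - W).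

Lemma gameW_valid d (W : 'M[C]_d) : psd W -> psd (1%:M - W) -> valid_game (gameW W).
Proof.
move=> pW pW'; split; [|split].
- split; first by move=> i /=; case: (_ == _).
  by rewrite big_ord_recl big_ord1 /= addr0.
- move=> i; exists 1%N, (fun _ => 1%:M); split.
    by rewrite big_ord1 adj1 mul1mx.
  by move=> X; rewrite big_ord1 adj1 mul1mx mulmx1.
- split; first by move=> i /=; case: (_ == _).
  by rewrite big_ord_recl big_ord1 /= addrC subrK.
Qed.

Lemma psucc_gameW d (W w : 'M[C]_d) : psucc w (gameW W) = Rc (\tr (W *m w)).
Proof.
by rewrite /psucc big_ord_recl big_ord1 /= mul1r mul0r addr0.
Qed.

End Games.


Section Ratio.
Local Open Scope complex_scope.
Variable R : realType.
Local Notation C := (R[i]).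
Local Notation Rc := (@complex.Re R).
Local Notation Ic := (@complex.Im R).

Lemma realcM (a b : R) : ((a * b)%:C : C) = a%:C * b%:C.
Proof. by apply: complex_eq => /=; ring. Qed.

Lemma ub_ratio d (F' : set 'M[C]_d) rho (s : R) tau (g : game R d) :
  F' `<=` density d -> 0 <= s -> density d tau ->
  F' (((1 + s)^-1)%:C *: (rho + s%:C *: tau)) -> valid_game g ->
  (game_ratio rho F' g <= (1 + s)%:E)%E.
Proof.
move=> Fd s0 dtau Fs hg.
set sg := _ *: _ in Fs.
have hb0 : 0 <= psucc sg g by apply: psucc_ge0 => //; case: (Fd _ Fs).
have ht0 : 0 <= psucc tau g by apply: psucc_ge0 => //; case: dtau.
have hs1 : 1 + s != 0 by rewrite gt_eqF //; lra.
have hab : psucc rho g <= (1 + s) * psucc sg g.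
  have e : sg = ((1 + s)^-1)%:C *: rho + ((1 + s)^-1 * s)%:C *: tau.
    by rewrite /sg scalerDr scalerA realcM.
  rewrite e psucc_lin //.
  have -> : (1 + s) * ((1 + s)^-1 * psucc rho g + (1 + s)^-1 * s * psucc tau g) =
     psucc rho g + s * psucc tau g by field.
  by have := mulr_ge0 s0 ht0; lra.
rewrite /game_ratio /max_psucc.
have hm : ((psucc sg g)%:E <= ereal_sup [set (psucc s1 g)%:E | s1 in F'])%E.
  by apply: ereal_sup_ubound; exists sg.
move: hm; case: (ereal_sup _) => [r| |] hm.
- rewrite lee_fin in hm; rewrite inver; case: eqP => [r0|rn0].
    have ha : psucc rho g <= 0 by rewrite r0 in hm; nra.
    have [ha0|ha0] := eqVneq (psucc rho g) 0.
      by rewrite ha0 mul0e lee_fin; lra.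
    have ha' : psucc rho g < 0 by rewrite lt_neqAle ha0 ha.
    by rewrite lt0_muley ?lte_fin // leNye.
  have r0 : 0 < r by rewrite lt_neqAle eq_sym; apply/andP; split; [apply/eqP|lra].
  rewrite -EFinM lee_fin ler_pdivrMr //; nra.
- by rewrite invey mule0 lee_fin; lra.
- by move: hm; rewrite leeNy_eq.
Qed.

Lemma ub_max_ratio d (F' : set 'M[C]_d) rho (s : R) tau :
  F' `<=` density d -> 0 <= s -> density d tau ->
  F' (((1 + s)^-1)%:C *: (rho + s%:C *: tau)) ->
  (max_ratio rho F' <= (1 + s)%:E)%E.
Proof.
move=> Fd s0 dt Fs; apply: ge_ereal_sup => y [g hg <-].
exact: (ub_ratio Fd s0 dt Fs hg).
Qed.

End Ratio.


Section LB.
Local Open Scope complex_scope.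
Variable R : realType.
Local Notation C := (R[i]).
Local Notation Rc := (@complex.Re R).
Local Notation Ic := (@complex.Im R).

Lemma lb_ratio_c d (F' : set 'M[C]_d) rho (c : R) :
  F' `<=` density d -> F' !=set0 -> mx_convex F' -> mx_closed F' ->
  density d rho -> 0 < c ->
  (forall s, F' s -> ~ psd (c%:C *: s - rho)) ->
  (c%:E <= max_ratio rho F')%E.
Proof.
move=> Fd [s0 Fs0] Fc Fcl drho c0 hn.
have [W0 [pW0 [del del0 hW0]]] := separation Fd (ex_intro _ s0 Fs0) Fc Fcl drho c0 hn.
set al := (1 + mxS W0)^-1.
have hS := mxS_ge0 W0.
have al0 : 0 < al by rewrite invr_gt0; lra.
pose W := al%:C *: W0.
have pW : psd W := psd_scale (ltW al0) pW0.
have pW' : psd (1%:M - W) := psd_bound pW0.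
set g := gameW W.
have hv : valid_game g := gameW_valid pW pW'.
have hps x : x = adj x -> psucc x g = al * ip W0 x.
  by move=> hx; rewrite psucc_gameW ip_trace // ipZl.
have ha : psucc rho g = al * ip W0 rho by apply: hps; case: drho => [[]].
have hF x : F' x -> c * psucc x g + al * del <= psucc rho g.
  move=> Fx; rewrite ha hps; last by case: (Fd _ Fx) => [[]].
  have := hW0 _ Fx; set p := ip W0 x; set q := ip W0 rho => h.
  by have := ler_wpM2l (ltW al0) h; rewrite mulrDr mulrA (mulrC al c) -mulrA.
have hge x : F' x -> 0 <= psucc x g by move=> Fx; apply: psucc_ge0 => //; case: (Fd _ Fx).
apply: le_trans (_ : game_ratio rho F' g <= _)%E; last first.
  by apply: ereal_sup_ubound; exists g.
rewrite /game_ratio /max_psucc.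
set a := psucc rho g.
have hm1 : (ereal_sup [set (psucc s1 g)%:E | s1 in F'] <= ((a - al * del) / c)%:E)%E.
  apply: ge_ereal_sup => _ [x Fx <-]; rewrite lee_fin ler_pdivlMr // mulrC.
  by have := hF x Fx; rewrite -/a; lra.
have hm0 : ((psucc s0 g)%:E <= ereal_sup [set (psucc s1 g)%:E | s1 in F'])%E.
  by apply: ereal_sup_ubound; exists s0.
have hg0 := hge s0 Fs0.
have hd0 : 0 < al * del by apply: mulr_gt0.
move: hm0 hm1; case: (ereal_sup _) => [r| |] hm0 hm1.
- rewrite lee_fin in hm0; rewrite lee_fin in hm1.
  have hc : c * r <= a - al * del by rewrite -ler_pdivlMl // mulrC.
  rewrite inver; case: eqP => [r0|rn0].
    have ha0 : 0 < a by rewrite r0 in hc; lra.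
    by rewrite gt0_muley ?lte_fin // leey.
  have r0 : 0 < r by rewrite lt_def (introN eqP rn0) /=; lra.
  rewrite -EFinM lee_fin ler_pdivlMr //; lra.
- by move: hm1; rewrite leye_eq.
- by move: hm0; rewrite leeNy_eq.
Qed.

Lemma psd1 d : psd (1%:M : 'M[C]_d).
Proof.
apply/psdP; split; first by rewrite adj1.
by move=> v; rewrite Re_qf1 vn_ge0.
Qed.

Lemma lb_ratio_1 d (F' : set 'M[C]_d) rho :
  F' `<=` density d -> F' !=set0 -> density d rho -> (1%:E <= max_ratio rho F')%E.
Proof.
move=> Fd [s0 Fs0] drho.
have p1 : psd (1%:M - 1%:M : 'M[C]_d) by rewrite subrr; exact: psd0.
set g := gameW (1%:M : 'M[C]_d).
have hv : valid_game g := gameW_valid (psd1 d) p1.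
have h1 x : density d x -> psucc x g = 1.
  by case=> _ tx; rewrite psucc_gameW mul1mx tx.
apply: le_trans (_ : game_ratio rho F' g <= _)%E; last first.
  by apply: ereal_sup_ubound; exists g.
rewrite /game_ratio /max_psucc.
have -> : ereal_sup [set (psucc s1 g)%:E | s1 in F'] = 1%E.
  apply/eqP; rewrite eq_le; apply/andP; split.
    by apply: ge_ereal_sup => _ [x Fx <-]; rewrite h1 //; exact: Fd.
  by apply: ereal_sup_ubound; exists s0 => //; rewrite h1 //; exact: Fd.
by rewrite inve1 mule1 h1.
Qed.

End LB.

Section Feas.
Local Open Scope complex_scope.
Lemma feasible_c (R : realType) d (U : set 'M[R[i]]_d) (S : set 'M[R[i]]_d) rho (c : R) sg :
  S `<=` U -> 1 < c -> S sg -> density d rho -> density d sg ->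
  psd ((c%:C)%C *: sg - rho) ->
  (gen_robustness U rho <= (c - 1)%:E)%E.
Proof.
move=> SU c1 Ssg drho dsg psg.
set s := c - 1.
have s0 : 0 < s by rewrite /s subr_gt0.
set tau := ((s^-1)%:C)%C *: ((c%:C)%C *: sg - rho).
apply: ereal_inf_lbound; exists s => //; split; first exact: ltW.
exists tau; split.
  split; first by apply: psd_scale => //; rewrite invr_ge0 ltW.
  rewrite /tau mxtraceZ raddfB /= mxtraceZ.
  case: drho => _ ->; case: dsg => _ ->.
  apply: complex_eq => /=; rewrite /s; field; lra.
apply: SU.
have -> : rho + (s%:C)%C *: tau = (c%:C)%C *: sg.
  rewrite /tau scalerA -realcM mulfV ?gt_eqF // scale1r.
  by rewrite addrC subrK.
rewrite scalerA -realcM (_ : 1 + s = c) ?mulVf ?scale1r //; last by rewrite /s; ring.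
by rewrite gt_eqF //; lra.
Qed.

End Feas.

Unset Implicit Arguments.

Theorem theorem7 (R : realType) (d : nat) (K : Type)
  (Fk : K -> set 'M[R[i]]_d) (rho : 'M[R[i]]_d) :
  (forall k, Fk k `<=` density d) ->
  (forall k, Fk k !=set0) ->
  (forall k, mx_convex (Fk k)) ->
  (forall k, mx_closed (Fk k)) ->
  mx_closed (\bigcup_k Fk k) ->
  density d rho ->
  ~ (\bigcup_k Fk k) rho ->
  ereal_inf [set max_ratio rho (Fk k) | k in [set: K]]
    = (1 + gen_robustness (\bigcup_k Fk k) rho)%E.
Proof.
move=> Fd Fne Fc Fcl _ drho nF.
set U := \bigcup_k Fk k.
set RF := gen_robustness U rho.
have RF0 : (0 <= RF)%E.
  by apply: le_ereal_inf_tmp => _ [s [s0 _] <-]; rewrite lee_fin.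
apply/eqP; rewrite eq_le; apply/andP; split.
  set x := ereal_inf _.
  have key : (x - 1%:E <= RF)%E.
    apply: le_ereal_inf_tmp => _ [s [s0 [tau [dt Us]]] <-].
    case: Us => k _ Fks.
    have h1 : (x <= max_ratio rho (Fk k))%E by apply: ereal_inf_lbound; exists k.
    have h2 := ub_max_ratio (Fd k) s0 dt Fks.
    by rewrite leeBlDl // -EFinD; apply: le_trans h1 h2.
  by rewrite -leeBlDl.
apply: le_ereal_inf_tmp => _ [k _ <-].
have hc (c : R) : (c%:E < 1 + RF)%E -> 1 < c -> (c%:E <= max_ratio rho (Fk k))%E.
  move=> hcRF c1; apply: lb_ratio_c => //; first by apply: lt_trans c1.
  move=> sg Fsg psg.
  have hsub : Fk k `<=` U by move=> x Fx; exists k.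
  have := @feasible_c R d U (Fk k) rho c sg hsub c1 Fsg drho (Fd k _ Fsg) psg.
  rewrite -/RF => hle.
  have : (1 + RF <= 1 + (c - 1)%:E)%E by apply: leeD2l.
  rewrite -EFinD (_ : 1 + (c - 1) = c); last by ring.
  by rewrite leNgt hcRF.
have G1 := lb_ratio_1 (Fd k) (Fne k) drho.
rewrite leNgt; apply/negP => hlt.
move: hc G1 hlt; case: (max_ratio rho (Fk k)) => [g| |] hc G1 hlt //.
- rewrite lee_fin in G1.
  move: hc hlt; case: RF RF0 => [r| |] RF0 hc hlt //.
  + rewrite lee_fin in RF0; rewrite -EFinD lte_fin in hlt.
    have := hc ((g + 1 + r) / 2); rewrite -EFinD !lte_fin lee_fin.
    move=> h; have := h ltac:(lra) ltac:(lra); lra.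
  + have := hc (g + 1); rewrite lee_fin => h.
    have := hc (g + 1); rewrite lee_fin => hh.
    have h1 : ((g + 1)%:E < 1 + +oo)%E by rewrite addey // ltey.
    have := hh h1 ltac:(lra); lra.
- move: hlt hc; case: RF RF0 => [r| |] _ //= hlt hc.
Qed.
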